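(* Let $s\in\tfrac12\mathbb{Z}_{>0}$, $\lambda\in\mathbb{C}$, $q=e^{\lambda}$, and define $a_j(u)=\sinh[u+(2s+1-j)\lambda]$ and $b_j(\lambda)=\sqrt{\sinh(j\lambda)\sinh[\lambda(2s+1-j)]}$. With $[n]=\frac{q^n-q^{-n}}{q-q^{-1}}=\frac{\sinh(n\lambda)}{\sinh\lambda}$, $[n]!=[n][n-1]\cdots[1]$, $[0]!=1$ and $\left[\begin{array}{c}m\\k\end{array}\right]=\frac{[m]!}{[m-k]!\,[k]!}$, define $$f^{(p)}(\sigma;u)=\sum_{k=0}^p(-e^{2\lambda\sigma})^k\left[\begin{array}{c}p\\k\end{array}\right]\prod_{j=1}^k\sinh[u+(j-1)\lambda]\prod_{j=k+1}^p\sinh[u+(2s+j-p)\lambda].$$ For any $\sigma\in\mathbb{C}$ these functions satisfy $$f^{(p)}(\sigma;u)+e^{2\lambda\sigma}a_{2s+2-p}(u)f^{(p-1)}(\sigma;u)=a_1(u)f^{(p-1)}(\sigma;u-\lambda),$$ $$a_{p+1}(u)f^{(p)}(\sigma;u)+e^{2\lambda\sigma}b_p(\lambda)^2f^{(p-1)}(\sigma;u)=f^{(p)}(\sigma;u-\lambda)a_1(u),$$ and $$a_1(u)a_{2s+1}(u)f^{(j-1)}(\sigma;u-\lambda)f^{(j-1)}(\sigma;u+\lambda)=a_j(u)a_{2s+2-j}(u)f^{(j-1)}(\sigma;u)^2-b_{j-1}(\lambda)^2f^{(j)}(\sigma;u)f^{(j-2)}(\sigma;u).$$ If moreover $\sigma\in\{-s,-s+1,\ldots,s\}$,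 then $$f^{(2s)}(\sigma;u-\lambda)=e^{2\lambda\sigma}f^{(2s)}(\sigma;u).$$
   Context: The functions $a_j(u),b_j(\lambda)$ are the non-zero matrix entries of the spin-$(\tfrac12,s)$ XXZ $R$-matrix $R^{(1,2s)}(u)$. The $q$-binomial theorem $\sum_{k=0}^{2s+1}a^k\left[\begin{array}{c}2s+1\\k\end{array}\right]=\prod_{j=-s}^s(1+aq^{2j})$ is used in the proof of the last identity. *)

(* Defs.v *)
From HB Require Import structures.
From mathcomp Require Import all_boot all_order all_algebra.
From mathcomp Require Import reals sequences exp trigo.
From mathcomp Require Import complex.
Set Implicit Arguments. Unset Strict Implicit. Unset Printing Implicit Defensive.
Import Order.TTheory GRing.Theory Num.Theory.
Local Open Scope ring_scope.
Local Open Scope complex_scope.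

Definition cexp (R : realType) (z : R[i]) : R[i] :=
  (expR (@complex.Re R z) * cos (@complex.Im R z)) +i* (expR (@complex.Re R z) * sin (@complex.Im R z)).

Definition csinh (R : realType) (z : R[i]) : R[i] := (cexp z - cexp (- z)) / 2.

Definition qnum (R : realType) (lam : R[i]) (m : nat) : R[i] :=
  csinh (m%:R * lam) / csinh lam.

Definition qfact (R : realType) (lam : R[i]) (m : nat) : R[i] :=
  \prod_(1 <= i < m.+1) qnum lam i.

Definition qbinom (R : realType) (lam : R[i]) (m k : nat) : R[i] :=
  qfact lam m / (qfact lam (m - k) * qfact lam k).

(* Throughout, n = 2s (a positive integer), so 2s+1-j = n+1-j. *)

Definition a_ent (R : realType) (n : nat) (lam : R[i]) (j : int) (u : R[i]) : R[i] :=
  csinh (u + (n%:R + 1 - j%:~R) * lam).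

Definition b_ent (R : realType) (n : nat) (lam : R[i]) (j : int) : R[i] :=
  sqrtC (csinh (j%:~R * lam) * csinh (lam * (n%:R + 1 - j%:~R))).

Definition fp (R : realType) (n : nat) (lam sigma : R[i]) (p : nat) (u : R[i]) : R[i] :=
  \sum_(0 <= k < p.+1)
     (- cexp (2 * lam * sigma)) ^+ k * qbinom lam p k
     * (\prod_(1 <= j < k.+1) csinh (u + (j%:R - 1) * lam))
     * (\prod_(k.+1 <= j < p.+1) csinh (u + (n%:R + j%:R - p%:R) * lam)).

(* Main.v *)
Require Import Defs.
From HB Require Import structures.
From mathcomp Require Import all_boot all_order all_algebra.
From mathcomp Require Import reals sequences exp trigo.
From mathcomp Require Import complex.
From mathcomp Require Import ring lra zify.
Import Order.TTheory GRing.Theory Num.Theory.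
Local Open Scope ring_scope.
Local Open Scope complex_scope.
Section S.
Variable R : realType.
Implicit Types x y z a b c : R[i].
Lemma cexpD x y : cexp (x + y) = cexp x * cexp y.
Proof.
case: x => a b; case: y => c d; rewrite /cexp /=.
rewrite expRD cosD sinD.
apply/eqP; rewrite eq_complex /=; apply/andP; split; apply/eqP; ring.
Qed.
Lemma cexp0 : cexp (0 : R[i]) = 1.
Proof. by rewrite /cexp /= expR0 cos0 sin0 !mulr1 mulr0. Qed.
Lemma cexpNK x : cexp (- x) * cexp x = 1.
Proof. by rewrite -cexpD addNr cexp0. Qed.
Lemma cexp_neq0 x : cexp x != 0.
Proof. apply/negP => /eqP h; have := cexpNK x; rewrite h mulr0 => /eqP; by rewrite eq_sym oner_eq0. Qed.
Lemma cexpN x : cexp (- x) = (cexp x)^-1.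
Proof. apply: (mulIf (cexp_neq0 x)); by rewrite cexpNK mulVf // cexp_neq0. Qed.
Lemma cexpB x y : cexp (x - y) = cexp x / cexp y.
Proof. by rewrite cexpD cexpN. Qed.
Lemma two_neq0 : (2 : R[i]) != 0.
Proof. by rewrite pnatr_eq0. Qed.
Lemma master a b c : csinh a * csinh b - csinh c * csinh (a + b - c) = csinh (c - b) * csinh (c - a).
Proof.
rewrite /csinh !opprB !cexpB cexpD !cexpN.
have := cexp_neq0 a; have := cexp_neq0 b; have := cexp_neq0 c; have := two_neq0.
move: (cexp a) (cexp b) (cexp c) => A B C *.
field; by apply/and3P.
Qed.
Lemma master' a b c d e f : a + b - c = d -> c - b = e -> c - a = f ->
  csinh a * csinh b - csinh c * csinh d = csinh e * csinh f.
Proof. by move=> <- <- <-; apply: master. Qed.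

Lemma cexp_nat (m : nat) z : cexp (m%:R * z) = cexp z ^+ m.
Proof.
elim: m => [|m IH]; first by rewrite mul0r cexp0 expr0.
by rewrite (_ : m.+1%:R * z = m%:R * z + z) ?cexpD ?IH ?exprSr //; ring.
Qed.

Lemma shift_sum (m : nat) (x : R[i]) (a b : nat -> R[i]) :
  \sum_(0 <= k < m.+1) x ^+ k * a k + x * \sum_(0 <= k < m) x ^+ k * b k
  = \sum_(0 <= k < m.+1) x ^+ k * (a k + (if k is k'.+1 then b k' else 0)).
Proof.
rewrite !big_nat_recl // addr0 -addrA; congr (_ + _).
rewrite mulr_sumr -big_split /=; apply: eq_bigr => i _.
by rewrite exprS; ring.
Qed.

Lemma pad_sum (m : nat) (x : R[i]) (c : nat -> R[i]) :
  \sum_(0 <= k < m) x ^+ k * c k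
  = \sum_(0 <= k < m.+1) x ^+ k * (if (k < m)%N then c k else 0).
Proof.
rewrite big_nat_recr //= ltnn mulr0 addr0.
by apply: eq_big_nat => i /andP[_ ->].
Qed.

Ltac nz := repeat (apply/andP; split); repeat (first [assumption | apply: mulf_neq0]).

Section Main.
Variables (n : nat) (lam sigma : R[i]).
Hypothesis hlam : forall m : nat, (0 < m)%N -> csinh (m%:R * lam) != 0.

Definition Ap u k := \prod_(1 <= j < k.+1) csinh (u + (j%:R - 1) * lam).
Definition Bp u p k := \prod_(k.+1 <= j < p.+1) csinh (u + (n%:R + j%:R - p%:R) * lam).
Definition A0 u k := \prod_(0 <= j < k) csinh (u + j%:R * lam).
Definition B0 u d := \prod_(0 <= i < d) csinh (u + (n%:R + 1 + i%:R - d%:R) * lam).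
Definition T p k u := qbinom lam p k * Ap u k * Bp u p k.

Lemma fpE p u : fp n lam sigma p u =
  \sum_(0 <= k < p.+1) (- cexp (2 * lam * sigma)) ^+ k * T p k u.
Proof. by apply: eq_bigr => k _; rewrite /T !mulrA. Qed.

Lemma Ap0 u k : Ap u k = A0 u k.
Proof.
elim: k => [|k IH]; first by rewrite /Ap /A0 !big_geq.
rewrite [LHS]/Ap big_nat_recr // -/(Ap u k) IH /A0 big_nat_recr //=.
by congr (_ * csinh _); ring.
Qed.

Lemma A0S u k : A0 u k.+1 = A0 u k * csinh (u + k%:R * lam).
Proof. by rewrite /A0 big_nat_recr. Qed.

Lemma A0Sl u k : A0 (u - lam) k.+1 = csinh (u - lam) * A0 u k.
Proof.
rewrite /A0 big_nat_recl // mul0r addr0; congr (_ * _).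
by apply: eq_bigr => i _; congr csinh; ring.
Qed.

Lemma Bp0 u k d : Bp u (k + d) k = B0 u d.
Proof.
rewrite /Bp /B0 -{1}(add0n k.+1) big_addn.
rewrite (_ : ((k + d).+1 - k.+1 = d)%N); last by rewrite subSS addKn.
by apply: eq_bigr => i _; congr csinh; ring.
Qed.

Lemma Bp0' u p k : (k <= p)%N -> Bp u p k = B0 u (p - k).
Proof. by move=> h; rewrite -(Bp0 u k) subnKC. Qed.

Lemma B0Sr u d : B0 u d.+1 = B0 (u - lam) d * csinh (u + n%:R * lam).
Proof.
rewrite /B0 big_nat_recr //; congr (_ * csinh _); last by ring.
by apply: eq_bigr => i _; congr csinh; ring.
Qed.

Lemma B0Sl u d : B0 u d.+1 = csinh (u + (n%:R - d%:R) * lam) * B0 u d.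
Proof.
rewrite /B0 big_nat_recl //; congr (csinh _ * _); first by ring.
by apply: eq_bigr => i _; congr csinh; ring.
Qed.

Lemma B00 u : B0 u 0 = 1.
Proof. by rewrite /B0 big_geq. Qed.
Lemma A00 u : A0 u 0 = 1.
Proof. by rewrite /A0 big_geq. Qed.

Lemma sh1 : csinh lam != 0.
Proof. by have := @hlam 1 (ltn0Sn 0); rewrite mulr1n mul1r. Qed.

Lemma qnum_neq0 m : (0 < m)%N -> qnum lam m != 0.
Proof. by move=> h; apply: mulf_neq0; [apply: hlam | rewrite invr_eq0 sh1]. Qed.

Lemma qfactS m : qfact lam m.+1 = qfact lam m * qnum lam m.+1.
Proof. by rewrite /qfact big_nat_recr. Qed.

Lemma qfact0 : qfact lam 0 = 1.
Proof. by rewrite /qfact big_geq. Qed.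

Lemma qfact_neq0 m : qfact lam m != 0.
Proof.
elim: m => [|m IH]; first by rewrite qfact0 oner_eq0.
by rewrite qfactS mulf_neq0 // qnum_neq0.
Qed.

Lemma qb0 m : qbinom lam m 0 = 1.
Proof. by rewrite /qbinom subn0 qfact0 mulr1 divff // qfact_neq0. Qed.

Lemma qbmm m : qbinom lam m m = 1.
Proof. by rewrite /qbinom subnn qfact0 mul1r divff // qfact_neq0. Qed.

Lemma qbS m k : qbinom lam m.+1 k.+1 = qbinom lam m k * qnum lam m.+1 / qnum lam k.+1.
Proof.
rewrite /qbinom subSS !qfactS.
have := qfact_neq0 m; have := qfact_neq0 k; have := qfact_neq0 (m - k).
have := @qnum_neq0 m.+1 (ltn0Sn m); have := @qnum_neq0 k.+1 (ltn0Sn k).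
move: (qfact lam m) (qfact lam k) (qfact lam (m - k)) (qnum lam m.+1) (qnum lam k.+1) => *.
by field; nz.
Qed.

Lemma qbSr m k : (k < m)%N -> qbinom lam m k.+1 = qbinom lam m k * qnum lam (m - k) / qnum lam k.+1.
Proof.
move=> h; rewrite -(subnKC h) /qbinom.
set d := (m - k.+1)%N.
rewrite (_ : (k.+1 + d - k = d.+1)%N); last by rewrite addSn subSn ?leq_addr // addKn.
rewrite (_ : (k.+1 + d - k.+1 = d)%N); last by rewrite addKn.
rewrite !qfactS.
have := qfact_neq0 (k.+1 + d); have := qfact_neq0 k; have := qfact_neq0 d.
have := @qnum_neq0 d.+1 (ltn0Sn d); have := @qnum_neq0 k.+1 (ltn0Sn k).
move: (qfact lam (k.+1 + d)) (qfact lam k) (qfact lam d) (qnum lam d.+1) (qnum lam k.+1) => *.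
by field; nz.
Qed.

Lemma Bpp u p : Bp u p p = 1.
Proof. by rewrite /Bp big_geq. Qed.

Lemma id1 p u : (1 <= p)%N ->
  fp n lam sigma p u + cexp (2 * lam * sigma) * a_ent n lam (n%:Z + 2 - p%:Z) u * fp n lam sigma p.-1 u
  = a_ent n lam 1 u * fp n lam sigma p.-1 (u - lam).
Proof.
case: p => // p _ /=.
set E := cexp (2 * lam * sigma).
have ea : a_ent n lam (n%:Z + 2 - p.+1%:Z) u = csinh (u + p%:R * lam).
  by rewrite /a_ent; congr csinh; ring.
have ea1 : a_ent n lam 1 u = csinh (u + n%:R * lam).
  by rewrite /a_ent; congr csinh; ring.
rewrite ea ea1 !fpE.
rewrite (_ : E * _ * _ = (- E) * \sum_(0 <= k < p.+1) (- E) ^+ k * (- csinh (u + p%:R * lam) * T p k u)); last first.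
  by rewrite !mulr_sumr; apply: eq_bigr => k _; ring.
rewrite shift_sum [RHS]mulr_sumr.
rewrite [RHS](eq_bigr (fun k => (- E) ^+ k * (csinh (u + n%:R * lam) * T p k (u - lam)))); last by move=> k _; ring.
rewrite [RHS]pad_sum; apply: eq_big_nat => k /andP[_ hk]; congr (_ * _).
case: k hk => [|k] hk.
  rewrite addr0 /= /T !qb0 !Ap0 !A00 !Bp0' // !subn0 B0Sr; ring.
have [hkp|hkp] := ltnP k p; last first.
  have -> : k = p by lia.
  rewrite ltnn /T !qbmm !Bpp !Ap0 A0S; ring.
rewrite ltnS hkp.
have [d ->] : exists d, p = (k + d.+1)%N by exists (p - k.+1)%N; lia.
have e1 : Bp u (k + d.+1).+1 k.+1 = B0 u d.+1 by rewrite Bp0' //; f_equal; lia.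
have e2 : Bp u (k + d.+1) k = B0 u d.+1 by rewrite Bp0' //; f_equal; lia.
have e3 : Bp (u - lam) (k + d.+1) k.+1 = B0 (u - lam) d by rewrite Bp0' //; f_equal; lia.
have e4 : qnum lam (k + d.+1 - k) = qnum lam d.+1 by f_equal; lia.
rewrite /T e1 e2 e3 qbS qbSr; last by lia.
rewrite e4.
rewrite !Ap0 A0S A0Sl !B0Sr /qnum.
have M : csinh ((k + d.+1).+1%:R * lam) * csinh (u + k%:R * lam)
   - csinh (u + (k + d.+1)%:R * lam) * csinh (k.+1%:R * lam)
   = csinh (d.+1%:R * lam) * csinh (u - lam) by apply: master'; ring.
have h1 := sh1; have h2 := @hlam k.+1 (ltn0Sn k); have h3 := @hlam d.+1 (ltn0Sn d).
have Hs : csinh (u - lam) = (csinh ((k + d.+1).+1%:R * lam) * csinh (u + k%:R * lam)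
   - csinh (u + (k + d.+1)%:R * lam) * csinh (k.+1%:R * lam)) / csinh (d.+1%:R * lam).
  by rewrite M; field.
rewrite Hs; field; nz.
Qed.

Lemma csinhN z : csinh (- z) = - csinh z.
Proof. by rewrite /csinh opprK; field. Qed.

Lemma B0sw u d : csinh (u + (n%:R - d%:R) * lam) * B0 u d = B0 (u - lam) d * csinh (u + n%:R * lam).
Proof. by rewrite -B0Sl B0Sr. Qed.

Lemma id3 p u :
  fp n lam sigma p.+1 u + cexp (2 * lam * sigma) * csinh u * fp n lam sigma p (u + lam)
  = csinh (u + (n%:R - p%:R) * lam) * fp n lam sigma p u.
Proof.
set E := cexp (2 * lam * sigma).
rewrite !fpE.
rewrite (_ : E * _ * _ = (- E) * \sum_(0 <= k < p.+1) (- E) ^+ k * (- csinh u * T p k (u + lam))); last first.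
  by rewrite !mulr_sumr; apply: eq_bigr => k _; ring.
rewrite shift_sum [RHS]mulr_sumr.
rewrite [RHS](eq_bigr (fun k => (- E) ^+ k * (csinh (u + (n%:R - p%:R) * lam) * T p k u))); last by move=> k _; ring.
rewrite [RHS]pad_sum; apply: eq_big_nat => k /andP[_ hk]; congr (_ * _).
have A0l : forall k, A0 u k.+1 = csinh u * A0 (u + lam) k.
  by move=> j; have := A0Sl (u + lam) j; rewrite addrK.
case: k hk => [|k] hk.
  rewrite addr0 /= /T !qb0 !Ap0 !A00 !Bp0' // !subn0 B0Sl; ring.
have [hkp|hkp] := ltnP k p; last first.
  have -> : k = p by lia.
  rewrite ltnn /T !qbmm !Bpp !Ap0 A0l; ring.
rewrite ltnS hkp.
have [d ->] : exists d, p = (k + d.+1)%N by exists (p - k.+1)%N; lia.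
have e1 : Bp u (k + d.+1).+1 k.+1 = B0 u d.+1 by rewrite Bp0' //; f_equal; lia.
have e2 : Bp (u + lam) (k + d.+1) k = B0 (u + lam) d.+1 by rewrite Bp0' //; f_equal; lia.
have e3 : Bp u (k + d.+1) k.+1 = B0 u d by rewrite Bp0' //; f_equal; lia.
have e4 : qnum lam (k + d.+1 - k) = qnum lam d.+1 by f_equal; lia.
have e5 : B0 (u + lam) d.+1 = B0 u d * csinh (u + lam + n%:R * lam).
  by rewrite B0Sr addrK.
rewrite /T e1 e2 e3 qbS qbSr; last by lia.
rewrite e4 !Ap0 !A0l e5 B0Sl /qnum.
have M : csinh ((k + d.+1).+1%:R * lam) * csinh (u + (n%:R - d%:R) * lam)
   - csinh (u + lam + n%:R * lam) * csinh (k.+1%:R * lam)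
   = csinh (d.+1%:R * lam) * csinh (u + (n%:R - (k + d.+1)%:R) * lam) by apply: master'; ring.
have h1 := sh1; have h2 := @hlam k.+1 (ltn0Sn k); have h3 := @hlam d.+1 (ltn0Sn d).
have Hs : csinh (u + (n%:R - (k + d.+1)%:R) * lam) = (csinh ((k + d.+1).+1%:R * lam) * csinh (u + (n%:R - d%:R) * lam)
   - csinh (u + lam + n%:R * lam) * csinh (k.+1%:R * lam)) / csinh (d.+1%:R * lam).
  by rewrite M; field.
rewrite Hs; field; nz.
Qed.

Lemma id2 p u : (1 <= p)%N ->
  a_ent n lam (p%:Z + 1) u * fp n lam sigma p u
    + cexp (2 * lam * sigma) * b_ent n lam p%:Z ^+ 2 * fp n lam sigma p.-1 u
  = fp n lam sigma p (u - lam) * a_ent n lam 1 u.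
Proof.
case: p => // p _ /=.
set E := cexp (2 * lam * sigma).
have ea : a_ent n lam (p.+1%:Z + 1) u = csinh (u + (n%:R - p.+1%:R) * lam).
  by rewrite /a_ent; congr csinh; ring.
have ea1 : a_ent n lam 1 u = csinh (u + n%:R * lam).
  by rewrite /a_ent; congr csinh; ring.
have eb : b_ent n lam p.+1%:Z ^+ 2 = csinh (p.+1%:R * lam) * csinh ((n%:R + 1 - p.+1%:R) * lam).
  by rewrite /b_ent sqrtCK; congr (csinh _ * csinh _); ring.
rewrite ea ea1 eb !fpE.
rewrite (_ : E * _ * _ = (- E) * \sum_(0 <= k < p.+1) (- E) ^+ k *
   (- (csinh (p.+1%:R * lam) * csinh ((n%:R + 1 - p.+1%:R) * lam)) * T p k u)); last first.
  by rewrite !mulr_sumr; apply: eq_bigr => k _; ring.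
rewrite [X in X + _]mulr_sumr.
rewrite [X in X + _](eq_bigr (fun k => (- E) ^+ k * (csinh (u + (n%:R - p.+1%:R) * lam) * T p.+1 k u))); last by move=> k _; ring.
rewrite shift_sum mulr_suml.
rewrite [RHS](eq_bigr (fun k => (- E) ^+ k * (T p.+1 k (u - lam) * csinh (u + n%:R * lam)))); last by move=> k _; ring.
apply: eq_big_nat => k /andP[_ hk]; congr (_ * _).
case: k hk => [|k] hk.
  rewrite addr0 /= /T !qb0 !Ap0 !A00 !mul1r !Bp0' // !subn0 B0sw; ring.
have [d ->] : exists d, p = (k + d)%N by exists (p - k)%N; lia.
have e1 : Bp u (k + d).+1 k.+1 = B0 u d by rewrite Bp0' //; f_equal; lia.
have e2 : Bp u (k + d) k = B0 u d by rewrite Bp0' //; f_equal; lia.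
have e3 : Bp (u - lam) (k + d).+1 k.+1 = B0 (u - lam) d by rewrite Bp0' //; f_equal; lia.
rewrite /T e1 e2 e3 qbS !Ap0 A0S A0Sl /qnum.
have e4 : forall X, X * B0 (u - lam) d * csinh (u + n%:R * lam) = X * (csinh (u + (n%:R - d%:R) * lam) * B0 u d).
  by move=> X; rewrite -(mulrA X (B0 _ _)) B0sw.
rewrite e4.
have M : csinh (u + (n%:R - (k + d).+1%:R) * lam) * csinh (u + k%:R * lam)
   - csinh (u - lam) * csinh (u + (n%:R - d%:R) * lam)
   = csinh (k.+1%:R * lam) * csinh ((n%:R + 1 - (k + d).+1%:R) * lam).
  by rewrite -[RHS]mulrNN -!csinhN; apply: master'; ring.
have h1 := sh1; have h2 := @hlam k.+1 (ltn0Sn k); have h3 := @hlam (k + d).+1 (ltn0Sn _).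
have Hs : csinh ((n%:R + 1 - (k + d).+1%:R) * lam) = (csinh (u + (n%:R - (k + d).+1%:R) * lam) * csinh (u + k%:R * lam)
   - csinh (u - lam) * csinh (u + (n%:R - d%:R) * lam)) / csinh (k.+1%:R * lam).
  by rewrite M; field.
rewrite Hs; field; nz.
Qed.

Lemma idq j u : (2 <= j)%N ->
     a_ent n lam 1 u * a_ent n lam (n%:Z + 1) u
       * fp n lam sigma (j - 1) (u - lam) * fp n lam sigma (j - 1) (u + lam)
     = a_ent n lam j%:Z u * a_ent n lam (n%:Z + 2 - j%:Z) u
         * fp n lam sigma (j - 1) u ^+ 2
       - b_ent n lam (j%:Z - 1) ^+ 2 * fp n lam sigma j u * fp n lam sigma (j - 2) u.
Proof.
case: j => [|[|i]] // _.
rewrite (_ : (i.+2 - 1 = i.+1)%N); last by lia.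
rewrite (_ : (i.+2 - 2 = i)%N); last by lia.
have H1 := @id1 i.+2 u isT.
have H2 := @id2 i.+1 u isT.
have H3 := id3 i.+1 u.
rewrite /= in H1 H2.
have ea : a_ent n lam (i.+1%:Z + 1) u = a_ent n lam i.+2%:Z u by rewrite /a_ent; congr csinh; ring.
have ea2 : csinh (u + (n%:R - i.+1%:R) * lam) = a_ent n lam i.+2%:Z u by rewrite /a_ent; congr csinh; ring.
have ea3 : a_ent n lam (n%:Z + 1) u = csinh u by rewrite /a_ent; congr csinh; ring.
have eb : b_ent n lam (i.+2%:Z - 1) = b_ent n lam i.+1%:Z by congr b_ent; lia.
rewrite ea in H2; rewrite ea2 in H3; rewrite ea3 eb.
move: H1 H2 H3.
set E := cexp _.
set a1 := a_ent n lam 1 u.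
set aj := a_ent n lam i.+2%:Z u.
set a' := a_ent n lam (n%:Z + 2 - i.+2%:Z) u.
set b2 := b_ent n lam i.+1%:Z ^+ 2.
set Fm := fp n lam sigma i.+1 (u - lam).
set Fp := fp n lam sigma i.+1 (u + lam).
set F0 := fp n lam sigma i.+1 u.
set Fj := fp n lam sigma i.+2 u.
set G := fp n lam sigma i u.
set s0 := csinh u.
move=> H1 H2 H3.
have hE : E != 0 by apply: cexp_neq0.
apply: (mulfI hE).
have -> : E * (a1 * s0 * Fm * Fp) = a1 * Fm * (E * s0 * Fp) by ring.
have -> : E * (aj * a' * F0 ^+ 2 - b2 * Fj * G) = E * aj * a' * F0 ^+ 2 - (E * b2 * G) * Fj by ring.
have -> : E * s0 * Fp = aj * F0 - Fj by rewrite -H3; ring.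
have -> : E * b2 * G = Fm * a1 - aj * F0 by rewrite -H2; ring.
have -> : Fj = a1 * Fm - E * a' * F0 by rewrite -H1; ring.
ring.
Qed.

Definition Qc := cexp lam.
Definition G m z := \sum_(0 <= j < m.+1) (- z) ^+ j * qbinom lam m j.

Lemma Qc_neq0 : Qc != 0.
Proof. exact: cexp_neq0. Qed.

Lemma QQ_neq0 : Qc - Qc^-1 != 0.
Proof.
have := sh1; rewrite /csinh cexpN -/Qc.
by apply: contra => /eqP ->; rewrite mul0r.
Qed.

Lemma QQ2 : Qc * Qc - 1 != 0.
Proof.
have h := QQ_neq0; have h2 := Qc_neq0.
rewrite (_ : Qc * Qc - 1 = Qc * (Qc - Qc^-1)) ?mulf_neq0 //.
by field.
Qed.

Lemma qnumQ m : qnum lam m = (Qc ^+ m - (Qc ^+ m)^-1) / (Qc - Qc^-1).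
Proof.
have h := QQ_neq0; have h2 := Qc_neq0.
have h3 := QQ2; have h4 : Qc ^+ m != 0 by rewrite expf_neq0.
rewrite /qnum /csinh cexpN cexp_nat -/Qc cexpN -/Qc.
by field; nz.
Qed.

Lemma Qpow_neq m : (0 < m)%N -> Qc ^+ m * Qc ^+ m - 1 != 0.
Proof.
move=> hm; have := @qnum_neq0 m hm; rewrite qnumQ; apply: contra => /eqP H.
have h := QQ_neq0; have h4 : Qc ^+ m != 0 by rewrite expf_neq0 // Qc_neq0.
have -> : Qc ^+ m - (Qc ^+ m)^-1 = (Qc ^+ m * Qc ^+ m - 1) / Qc ^+ m by field.
by rewrite H !mul0r.
Qed.

Lemma Grec m z : G m.+1 z = (1 - z * Qc ^+ m) * G m (z / Qc).
Proof.
have hQ := Qc_neq0.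
rewrite /G mulrBl mul1r.
rewrite (_ : \sum_(0 <= j < m.+1) (- (z / Qc)) ^+ j * qbinom lam m j
   = \sum_(0 <= j < m.+1) (- z) ^+ j * (Qc ^- j * qbinom lam m j)); last first.
  by apply: eq_bigr => j _; rewrite -mulNr exprMn exprVn; ring.
rewrite (_ : z * Qc ^+ m * _ = - ((- z) * \sum_(0 <= j < m.+1) (- z) ^+ j * (Qc ^+ m * Qc ^- j * qbinom lam m j))); last first.
  by rewrite mulNr opprK !mulr_sumr; apply: eq_bigr => j _; ring.
rewrite opprK [in RHS]pad_sum shift_sum.
apply: eq_big_nat => j /andP[_ hj]; congr (_ * _).
case: j hj => [|j] hj.
  by rewrite !qb0 expr0 invr1 mul1r addr0.
have [hjm|hjm] := ltnP j m; last first.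
  have -> : j = m by lia.
  by rewrite ltnn add0r !qbmm mulr1 divff // expf_neq0.
rewrite ltnS hjm.
have [d ->] : exists d, m = (j + d.+1)%N by exists (m - j.+1)%N; lia.
rewrite qbS qbSr; last by lia.
rewrite (_ : (j + d.+1 - j = d.+1)%N); last by lia.
rewrite !qnumQ.
have h := QQ_neq0.
rewrite !exprS !exprD !exprS.
have h1 : Qc ^+ j != 0 by rewrite expf_neq0.
have h2 : Qc ^+ d != 0 by rewrite expf_neq0.
have h6 := QQ2; have h5 := @Qpow_neq j.+1 (ltn0Sn j); rewrite exprS in h5.
move: (Qc ^+ j) (Qc ^+ d) h1 h2 h5 (qbinom lam (j + d.+1) j) => A D h1 h2 h5 B.
rewrite !invfM.
field; nz.
Qed.

Lemma Gzero m j : (j <= m)%N -> G m.+1 (Qc ^+ (j.*2) / Qc ^+ m) = 0.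
Proof.
have hQ := Qc_neq0.
elim: m j => [|m IH] j hj.
  have -> : j = 0%N by lia.
  by rewrite Grec expr0 divr1 mul1r subrr mul0r.
rewrite Grec; case: j hj => [|j] hj.
  by rewrite expr0 mul1r mulVf ?expf_neq0 // subrr mul0r.
have hm : Qc ^+ m != 0 by rewrite expf_neq0.
rewrite (_ : Qc ^+ (j.+1).*2 / Qc ^+ m.+1 / Qc = Qc ^+ (j.*2) / Qc ^+ m).
  by rewrite IH ?mulr0 //; lia.
rewrite doubleS !exprS; move: (Qc ^+ j.*2) (Qc ^+ m) hm => A M hm.
by field; nz.
Qed.

Lemma A0add u j m : A0 u (j + m) = A0 u j * \prod_(0 <= i < m) csinh (u + (j + i)%:R * lam).
Proof.
elim: m => [|m IH]; first by rewrite addn0 big_geq // mulr1.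
by rewrite addnS A0S IH big_nat_recr //= mulrA.
Qed.

Lemma A0split u j d : n = (j + d.+1)%N -> A0 u n = A0 u j * csinh (u + j%:R * lam) * B0 (u - lam) d.
Proof.
move=> hn.
have -> : A0 u n = A0 u (j + d.+1) by rewrite hn.
rewrite A0add big_nat_recl // -mulrA addn0; congr (_ * (_ * _)).
by rewrite /B0; apply: eq_bigr => i _; congr csinh; rewrite hn; ring.
Qed.

Lemma B0n u : B0 (u - lam) n = A0 u n.
Proof. by rewrite /B0 /A0; apply: eq_bigr => i _; congr csinh; ring. Qed.

Lemma part4 k : (k <= n)%N -> sigma = k%:R - n%:R / 2 ->
  forall u, fp n lam sigma n (u - lam) = cexp (2 * lam * sigma) * fp n lam sigma n u.
Proof.
move=> hk hs u.
have hE : cexp (2 * lam * sigma) = Qc ^+ (k.*2) / Qc ^+ n.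
  rewrite hs (_ : 2 * lam * (k%:R - n%:R / 2) = (k.*2)%:R * lam - n%:R * lam).
    by rewrite cexpB !cexp_nat.
  by rewrite -muln2 natrM; field.
apply/eqP; rewrite -subr_eq0; apply/eqP.
set E := cexp (2 * lam * sigma).
rewrite (_ : _ - _ = A0 u n * G n.+1 E); first by rewrite /E hE Gzero // mulr0.
rewrite !fpE -mulNr [X in X + _]pad_sum shift_sum /G mulr_sumr.
apply: eq_big_nat => j /andP[_ hj].
rewrite mulrCA; congr (_ * _).
case: j hj => [|j] hj.
  by rewrite addr0 /= /T !qb0 !Ap0 !A00 !Bp0' // !subn0 B0n; ring.
have [hjn|hjn] := ltnP j n; last first.
  have -> : j = n by lia.
  by rewrite ltnn add0r /T !qbmm !Bpp !Ap0; ring.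
rewrite ltnS hjn.
have [d hn] : exists d, n = (j + d.+1)%N by exists (n - j.+1)%N; lia.
have e1 : Bp (u - lam) n j.+1 = B0 (u - lam) d by rewrite Bp0' //; f_equal; lia.
have e2 : Bp u n j = B0 u d.+1 by rewrite Bp0' //; f_equal; lia.
have e4 : qnum lam (n - j) = qnum lam d.+1 by f_equal; lia.
rewrite /T e1 e2 qbS qbSr //.
rewrite e4 !Ap0 A0Sl B0Sr (@A0split u j d hn) /qnum.
have M : csinh (n.+1%:R * lam) * csinh (u + j%:R * lam)
   - csinh (u + n%:R * lam) * csinh (j.+1%:R * lam)
   = csinh (d.+1%:R * lam) * csinh (u - lam).
  apply: master'; [ring | rewrite hn; ring | ring].
have h1 := sh1; have h2 := @hlam j.+1 (ltn0Sn j); have h3 := @hlam d.+1 (ltn0Sn d).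
have Hs : csinh (u - lam) = (csinh (n.+1%:R * lam) * csinh (u + j%:R * lam)
   - csinh (u + n%:R * lam) * csinh (j.+1%:R * lam)) / csinh (d.+1%:R * lam).
  by rewrite M; field.
rewrite Hs; field; nz.
Qed.

End Main.
End S.

Theorem lemma1 (R : realType) (n : nat) (hn : (0 < n)%N) (lam sigma : R[i])
    (hlam : forall m : nat, (0 < m)%N -> csinh (m%:R * lam) != 0) :
  (forall (p : nat) (u : R[i]), (1 <= p)%N ->
     fp n lam sigma p u
       + cexp (2 * lam * sigma) * a_ent n lam (n%:Z + 2 - p%:Z) u
         * fp n lam sigma p.-1 u
     = a_ent n lam 1 u * fp n lam sigma p.-1 (u - lam))
  /\
  (forall (p : nat) (u : R[i]), (1 <= p)%N ->
     a_ent n lam (p%:Z + 1) u * fp n lam sigma p u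
       + cexp (2 * lam * sigma) * b_ent n lam p%:Z ^+ 2 * fp n lam sigma p.-1 u
     = fp n lam sigma p (u - lam) * a_ent n lam 1 u)
  /\
  (forall (j : nat) (u : R[i]), (2 <= j)%N ->
     a_ent n lam 1 u * a_ent n lam (n%:Z + 1) u
       * fp n lam sigma (j - 1) (u - lam) * fp n lam sigma (j - 1) (u + lam)
     = a_ent n lam j%:Z u * a_ent n lam (n%:Z + 2 - j%:Z) u
         * fp n lam sigma (j - 1) u ^+ 2
       - b_ent n lam (j%:Z - 1) ^+ 2 * fp n lam sigma j u * fp n lam sigma (j - 2) u)
  /\
  (forall k : nat, (k <= n)%N -> sigma = k%:R - n%:R / 2 ->
     forall u : R[i],
       fp n lam sigma n (u - lam) = cexp (2 * lam * sigma) * fp n lam sigma n u).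
Proof.
split; [|split; [|split]].
- by move=> p u hp; apply: id1.
- by move=> p u hp; apply: id2.
- by move=> j u hj; apply: idq.
- by move=> k hk hs u; exact: (@part4 R n lam sigma hlam k hk hs u).
Qed.
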